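(* Let $V$ be a Whittaker module of type $\eta$ over $R$ with cyclic Whittaker vector $w$. Write $Z_V=(p(\Omega))$ where $p=\prod_{i=1}^m p_i^{n_i}$ with $p_1,\dots,p_m$ pairwise non-associate irreducible polynomials and $n_i\ge1$. For $i=1,\dots,m$ set $V_i=R\prod_{j\neq i}p_j(\Omega)^{n_j}w$. Then each $V_i$ is an indecomposable submodule of $V$, and \[ V=V_1\oplus\cdots\oplus V_m . \]
   Context: Let $f\in\mathbb{C}[H]$ be a polynomial. $R=R(f)$ is the associative $\mathbb{C}$-algebra generated by $E,F,H$ with relations $EF-FE=f(H)$, $HE-EH=E$, $HF-FH=-F$. Let $u\in\mathbb{C}[H]$ satisfy $f(H)=\tfrac12(u(H+1)-u(H))$ and $\Omega=2FE+u(H+1)$; the center $Z(R)$ is the polynomial ring $\mathbb{C}[\Omega]$. Let $R(E)=\mathbb{C}[E]$ and fix an algebra homomorphism $\eta:R(E)\to\mathbb{C}$ with $\eta(E)\neq0$. A vector $v$ of an $R$-module $V$ is a Whittaker vector of type $\eta$ if $Ev=\eta(E)v$; $V$ is a Whittaker module of type $\eta$ with cyclic Whittaker vector $w$ if $w$ is a Whittaker vector and $V=Rw$. $Z_V=\mathrm{Ann}_R(V)\cap Z(R)$. *)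

(* Defs.v *)
From HB Require Import structures.
From mathcomp Require Import all_boot all_order all_algebra all_field.
Set Implicit Arguments. Unset Strict Implicit. Unset Printing Implicit Defensive.
Import GRing.Theory.
Local Open Scope ring_scope.

(* Modules over R(f) = C<E,F,H>/(relations) are modelled, as usual for an
   algebra given by generators and relations, by C-vector spaces V (with C
   the algebraic complex numbers algC) with three linear operators E,F,H
   satisfying the defining relations. *)

Section RfModules.
Variable V : lmodType algC.

Definition pact (T : V -> V) (q : {poly algC}) (v : V) : V :=
  \sum_(i < size q) q`_i *: iter i T v.

Definition Rf_relations (f : {poly algC}) (E F H : V -> V) : Prop :=
  forall v : V,
    [/\ E (F v) - F (E v) = pact H f v,
        H (E v) - E (H v) = E v
      & H (F v) - F (H v) = - F v].

Definition Omega (u : {poly algC}) (E F H : V -> V) (v : V) : V :=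
  2%:R *: F (E v) + pact (fun x => H x + x) u v.

Inductive gen (E F H : V -> V) (x : V) : V -> Prop :=
  | gen_base : gen E F H x x
  | gen_add a b : gen E F H x a -> gen E F H x b -> gen E F H x (a + b)
  | gen_scale (c : algC) a : gen E F H x a -> gen E F H x (c *: a)
  | gen_E a : gen E F H x a -> gen E F H x (E a)
  | gen_F a : gen E F H x a -> gen E F H x (F a)
  | gen_H a : gen E F H x a -> gen E F H x (H a).

Definition submodule (E F H : V -> V) (S : V -> Prop) : Prop :=
  [/\ S 0, (forall a b, S a -> S b -> S (a + b)),
      (forall (c : algC) a, S a -> S (c *: a))
    & [/\ (forall a, S a -> S (E a)), (forall a, S a -> S (F a))
         & (forall a, S a -> S (H a))]].

Definition zero_set (S : V -> Prop) : Prop := forall a, S a -> a = 0.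

Definition indecomposable (E F H : V -> V) (S : V -> Prop) : Prop :=
  [/\ submodule E F H S, ~ zero_set S &
      forall A B : V -> Prop, submodule E F H A -> submodule E F H B ->
        (forall a, A a -> S a) -> (forall b, B b -> S b) ->
        (forall s, S s -> exists a b, [/\ A a, B b & s = a + b]) ->
        (forall x, A x -> B x -> x = 0) ->
        zero_set A \/ zero_set B].

Definition direct_sum_decomp (m : nat) (Vs : 'I_m -> V -> Prop) : Prop :=
  (forall v : V, exists vs : 'I_m -> V,
      (forall i, Vs i (vs i)) /\ v = \sum_(i < m) vs i) /\
  (forall vs : 'I_m -> V, (forall i, Vs i (vs i)) ->
      \sum_(i < m) vs i = 0 -> forall i, vs i = 0).

End RfModules.

(* Main.v *)
Require Import Defs.
From HB Require Import structures.
From mathcomp Require Import all_boot all_order all_algebra all_field.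
Import GRing.Theory Num.Theory.
Local Open Scope ring_scope.


Definition NN j : {poly algC} := \prod_(k < j) ('X + (k%:R)%:P).

Lemma NNS j : NN j.+1 = NN j * 'X + j%:R *: NN j.
Proof. rewrite /NN big_ord_recr /= polyC_natr scaler_nat mulrDr mulr_natr. done. Qed.

Lemma NN_shift j : NN j.+1 \Po ('X + (-1)%:P) = NN j.+1 - j.+1%:R *: NN j.
Proof.
have L : NN j.+1 \Po ('X + (-1)%:P) = ('X + (-1)%:P) * NN j.
  rewrite /NN rmorph_prod big_ord_recl /=; congr (_ * _).
    by rewrite comp_polyD comp_polyX comp_polyC polyC0 addr0.
  apply: eq_bigr => i _; rewrite comp_polyD comp_polyX comp_polyC -addrA -polyCD.
  congr ('X + _%:P); by rewrite /bump /= add1n -natr1 addrCA addNr addr0.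
by rewrite L NNS !scaler_nat polyCN polyC1 mulrS mulrDl mulNr mul1r [_ * 'X]mulrC opprD addrA addrAC addrK.
Qed.

Lemma irr_cop (p q : {poly algC}) : irreducible_poly p -> coprimep p q \/ p %| q.
Proof.
move=> hp; case hc: (coprimep p q); [by left | right].
have hs : size (gcdp p q) != 1%N by rewrite -coprimep_def hc.
have := hp.2 _ hs (dvdp_gcdl p q) => /eqp_dvdl <-; exact: dvdp_gcdr.
Qed.

Lemma irr_size (p : {poly algC}) : irreducible_poly p -> size p != 1%N.
Proof. by move=> [hp _]; rewrite neq_ltn hp orbT. Qed.

Lemma irr_coprime (p q : {poly algC}) : irreducible_poly p -> irreducible_poly q ->
  ~~ (p %= q) -> coprimep p q.
Proof.
move=> hp hq hn; case: (irr_cop p q hp) => // hd.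
by move: hn; rewrite (hq.2 _ (irr_size _ hp) hd).
Qed.

Lemma pp_split (p c : {poly algC}) n : irreducible_poly p ->
  p ^+ n %| c * (1 - c) -> p ^+ n %| c \/ p ^+ n %| 1 - c.
Proof.
move=> hp hd; case: (irr_cop p c hp) => hc.
  by right; rewrite -(Gauss_dvdpr _ (coprimep_expl n hc)).
left; case: (irr_cop p (1 - c) hp) => hc'.
  by rewrite -(Gauss_dvdpl _ (coprimep_expl n hc')).
have : p %| c + (1 - c) by apply: dvdp_add.
by rewrite addrC subrK dvdp1 => /eqP h; move: (irr_size _ hp); rewrite h.
Qed.

Lemma prod_dvd (I : eqType) (r : I -> {poly algC}) (g : {poly algC}) (s : seq I) :
  uniq s -> (forall i j, i != j -> coprimep (r i) (r j)) ->
  (forall i, r i %| g) -> \prod_(i <- s) r i %| g.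
Proof.
move=> us hc hd; elim: s us => [|i s IH] /=; first by rewrite big_nil dvd1p.
case/andP => ni us; rewrite big_cons Gauss_dvdp ?hd ?IH //.
elim: s ni {us IH} => [|j s IH] /=; first by rewrite big_nil coprimep1.
rewrite in_cons negb_or => /andP [nij ni]; rewrite big_cons coprimepMr IH // andbT.
exact: hc.
Qed.

Lemma dvdp_ex (d p : {poly algC}) : d %| p -> exists k, p = k * d.
Proof. by move/dvdpP. Qed.

Section Pact.
Variable V : lmodType algC.
Implicit Types (T S : V -> V) (p q : {poly algC}) (v a b : V).

Definition lin (T : V -> V) :=
  (forall a b, T (a + b) = T a + T b) /\ (forall (c : algC) a, T (c *: a) = c *: T a).

Lemma lin0 T : lin T -> T 0 = 0.
Proof. move=> [_ hs]. have := hs 0 0. rewrite !scale0r. done. Qed.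

Lemma lin_sum T n (g : 'I_n -> V) : lin T -> T (\sum_(i < n) g i) = \sum_(i < n) T (g i).
Proof.
move=> hT; elim/big_rec2: _ => [|i x y _ <-]; [exact: lin0 | exact: (proj1 hT)].
Qed.

Lemma lin_iter T n : lin T -> lin (iter n T).
Proof.
move=> [ha hs]; elim: n => [|n [IHa IHs]]; rewrite /lin //= => *; split => *; by rewrite ?IHa ?IHs ?ha ?hs.
Qed.

Lemma pactE (T : V -> V) (q : {poly algC}) v n : (size q <= n)%N ->
  pact T q v = \sum_(i < n) q`_i *: iter i T v.
Proof.
move=> hn; rewrite /pact (big_ord_widen n (fun i => q`_i *: iter i T v) hn) big_mkcond.
apply: eq_bigr => i _; case: ifP => // /negbT; rewrite -leqNgt => /(nth_default 0) ->.
by rewrite scale0r.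
Qed.

Lemma pactD T p q v : pact T (p + q) v = pact T p v + pact T q v.
Proof.
rewrite !(@pactE T _ v (maxn (size p) (size q))) ?leq_maxl ?leq_maxr ?size_add //.
by rewrite -big_split; apply: eq_bigr => i _; rewrite coefD scalerDl.
Qed.

Lemma pactZ T c p v : pact T (c *: p) v = c *: pact T p v.
Proof.
rewrite !(@pactE T _ v (size p)) ?size_scale_leq //.
by rewrite scaler_sumr; apply: eq_bigr => i _; rewrite coefZ scalerA.
Qed.

Lemma pact0 T v : pact T 0 v = 0.
Proof. by rewrite /pact size_poly0 big_ord0. Qed.

Lemma pactN T p v : pact T (- p) v = - pact T p v.
Proof. by rewrite -(scaleN1r p) pactZ scaleN1r. Qed.

Lemma pactB T p q v : pact T (p - q) v = pact T p v - pact T q v.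
Proof. by rewrite pactD pactN. Qed.

Lemma pactC T c v : pact T c%:P v = c *: v.
Proof. by rewrite (@pactE T _ v 1) ?size_polyC ?leq_b1 // big_ord1 coefC. Qed.

Lemma pact1 T v : pact T 1 v = v.
Proof. by rewrite pactC scale1r. Qed.

Lemma pact_sum T n (g : 'I_n -> {poly algC}) v :
  pact T (\sum_(i < n) g i) v = \sum_(i < n) pact T (g i) v.
Proof. exact: (big_morph (fun p => pact T p v) (fun p q => pactD T p q v) (pact0 T v)). Qed.

Lemma pactMX T p v : pact T (p * 'X) v = pact T p (T v).
Proof.
have [->|p0] := eqVneq p 0; first by rewrite mul0r !pact0.
rewrite /pact size_mulX // big_ord_recl coefMX /= scale0r add0r.
by apply: eq_bigr => i _; rewrite coefMX /= add0n -iterS iterSr.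
Qed.

Lemma pactX T v : pact T 'X v = T v.
Proof. by rewrite -(mul1r 'X) pactMX pact1. Qed.

Lemma iter_comm T S T' n v : (forall a, S (T a) = T' (S a)) ->
  S (iter n T v) = iter n T' (S v).
Proof. by move=> h; elim: n => //= n <-; rewrite h. Qed.

Lemma iter_ext T T' n v : (forall a, T a = T' a) -> iter n T v = iter n T' v.
Proof. by move=> h; elim: n => //= n ->. Qed.

Lemma pact_ext T T' p v : (forall a, T a = T' a) -> pact T p v = pact T' p v.
Proof. by move=> h; apply: eq_bigr => i _; rewrite (iter_ext _ _ _ _ h). Qed.

Lemma pact_comm T S T' p v : lin S -> (forall a, S (T a) = T' (S a)) ->
  S (pact T p v) = pact T' p (S v).
Proof.
move=> hS h; rewrite /pact lin_sum //; apply: eq_bigr => i _.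
by rewrite (proj2 hS) (iter_comm _ _ _ _ _ h).
Qed.

Lemma pact_lin T p : lin T -> lin (pact T p).
Proof.
move=> hT; have hi := fun n => lin_iter T n hT; split => *; rewrite /pact.
  by rewrite -big_split; apply: eq_bigr => i _; rewrite (proj1 (hi _)) scalerDr.
by rewrite scaler_sumr; apply: eq_bigr => i _; rewrite (proj2 (hi _)) !scalerA mulrC.
Qed.

Lemma pactM T p q v : lin T -> pact T (p * q) v = pact T p (pact T q v).
Proof.
move=> hT; elim/poly_ind: p v => [|p c IH] v; first by rewrite mul0r !pact0.
rewrite mulrDl pactD mul_polyC pactZ mulrAC pactMX IH pactD pactMX pactC.
by rewrite [T (pact _ _ _)](pact_comm _ _ _ _ _ hT (fun a => erefl)).
Qed.

Lemma pact_comp T p c v : lin T ->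
  pact T (p \Po ('X + c%:P)) v = pact (fun a => T a + c *: a) p v.
Proof.
move=> hT; rewrite comp_polyE pact_sum; apply: eq_bigr => i _; rewrite pactZ.
congr (_ *: _); elim: (nat_of_ord i) => [|k IH] /=; first by rewrite expr0 pact1.
by rewrite exprS pactM // IH pactD pactX pactC.
Qed.


Section Rf.
Variables (f u : {poly algC}) (E F H : {linear V -> V}).
Hypothesis hfu : f = 2%:R^-1 *: (u \Po ('X + 1) - u).
Hypothesis hrel : Rf_relations f E F H.
Implicit Types (g : {poly algC}) (y : V).

Lemma linL (L : {linear V -> V}) : lin L.
Proof. by split => *; rewrite ?linearD ?linearZ. Qed.

Definition Hp a := H a + a.
Definition Om := Omega u E F H.
Definition pO := pact Om.

Lemma linHp : lin Hp.
Proof. by split => *; rewrite /Hp linearD ?linearZ ?scalerDr // addrACA. Qed.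

Lemma linOm : lin Om.
Proof.
have [pa ps] := pact_lin (fun x => H x + x) u linHp.
have [ea es] := linL E; have [fa fs] := linL F.
rewrite /Om /Omega; split => [a b|c a].
  by rewrite ea fa pa scalerDr addrACA.
by rewrite es fs ps scalerDr !scalerA mulrC.
Qed.

Lemma zk1 (M : zmodType) (x y : M) : x = y + (x - y).
Proof. by rewrite addrC subrK. Qed.
Lemma zk2 (M : zmodType) (x y : M) : x = y - (y - x).
Proof. by rewrite opprB addrC subrK. Qed.

Lemma relEF v : E (F v) = F (E v) + pact H f v.
Proof. case: (hrel v) => h _ _; rewrite -h; exact: zk1. Qed.
Lemma relEH v : E (H v) = H (E v) - E v.
Proof. case: (hrel v) => _ h _; rewrite -[X in _ = _ - X]h; exact: zk2. Qed.
Lemma relFH v : F (H v) = H (F v) + F v.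
Proof.
case: (hrel v) => _ _ h; have e : F v = - (H (F v) - F (H v)) by rewrite h opprK.
rewrite {2}e opprB; exact: zk1.
Qed.

Lemma two_neq0 : (2%:R : algC) != 0.
Proof. by rewrite pnatr_eq0. Qed.

Lemma fshift T y : lin T ->
  2%:R *: pact T f y + pact T u y = pact (fun a => T a + a) u y.
Proof.
move=> hT; rewrite hfu pactZ scalerA mulfV ?two_neq0 // scale1r pactB.
rewrite -[Y in 'X + Y]polyC1 pact_comp // subrK.
by apply: pact_ext => a; rewrite scale1r.
Qed.

Lemma zk3 (M : zmodType) (x y z : M) : x = y - z -> y = x + z.
Proof. by move=> ->; rewrite subrK. Qed.
Lemma zk4 (M : zmodType) (x y z : M) : x = y + z -> y = x - z.
Proof. by move=> ->; rewrite addrK. Qed.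

Lemma zk5 (M : zmodType) (p q s t : M) : p + q = s + t -> p - s = t - q.
Proof. by move=> h; rewrite -[p](addrK q) h addrAC [s + t]addrC addrK. Qed.

Lemma HE a : H (E a) = E (H a) + E a.
Proof. exact: zk3 (relEH a). Qed.
Lemma HF a : H (F a) = F (H a) - F a.
Proof. exact: zk4 (relFH a). Qed.
Lemma EHp a : E (H a + a) = H (E a).
Proof. by rewrite (proj1 (linL E)) relEH subrK. Qed.
Lemma FHp a : F (H a + a) = (H (F a) + F a) + F a.
Proof. by rewrite (proj1 (linL F)) relFH. Qed.
Lemma HHp a : H (H a + a) = H (H a) + H a.
Proof. by rewrite (proj1 (linL H)). Qed.
Lemma HFE v : H (F (E v)) = F (E (H v)).
Proof. by rewrite HF HE (proj1 (linL F)) addrK. Qed.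

Lemma OmH v : H (Om v) = Om (H v).
Proof.
rewrite /Om /Omega (proj1 (linL H)) (proj2 (linL H)) HFE.
congr (_ + _); exact: (pact_comm _ _ _ _ _ (linL H) HHp).
Qed.

Lemma OmE v : E (Om v) = Om (E v).
Proof.
rewrite /Om /Omega (proj1 (linL E)) (proj2 (linL E)) relEF scalerDr -addrA.
rewrite (pact_comm _ _ _ _ _ (linL E) EHp) -/Hp; congr (_ + _).
exact: (fshift _ _ (linL H)).
Qed.

Lemma OmF v : F (Om v) = Om (F v).
Proof.
rewrite /Om /Omega (proj1 (linL F)) (proj2 (linL F)) relEF.
rewrite (proj1 (linL F)) scalerDr -addrA.
congr (_ + _).
transitivity (pact (fun a => (H a + a) + a) u (F v)).
  exact: (pact_comm _ _ _ _ _ (linL F) FHp).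
symmetry; have -> : F (pact H f v) = pact (fun a => H a + a) f (F v).
  exact: (pact_comm _ _ _ _ _ (linL F) relFH).
exact: (fshift _ _ linHp).
Qed.

Lemma linpO g : lin (pO g).
Proof. exact: (pact_lin _ _ linOm). Qed.

Lemma pOM g h v : pO (g * h) v = pO g (pO h v).
Proof. exact: (pactM _ _ _ _ linOm). Qed.

Lemma pOX g v : pO ('X * g) v = Om (pO g v).
Proof. by rewrite pOM /pO pactX. Qed.

Lemma pOE g v : E (pO g v) = pO g (E v).
Proof. exact: (pact_comm _ _ _ _ _ (linL E) OmE). Qed.
Lemma pOF g v : F (pO g v) = pO g (F v).
Proof. exact: (pact_comm _ _ _ _ _ (linL F) OmF). Qed.
Lemma pOH g v : H (pO g v) = pO g (H v).
Proof. exact: (pact_comm _ _ _ _ _ (linL H) OmH). Qed.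

Lemma sub_sum (S : V -> Prop) n (G : 'I_n -> V) :
  submodule E F H S -> (forall i, S (G i)) -> S (\sum_(i < n) G i).
Proof.
case=> h0 ha _ _ hG; elim/big_rec: _ => [|i x _ hx]; first exact: h0.
exact: ha.
Qed.

Lemma sub_pact (S : V -> Prop) T p a : submodule E F H S ->
  (forall b, S b -> S (T b)) -> S a -> S (pact T p a).
Proof.
move=> hS hT ha; apply: sub_sum => // i; case: hS => _ _ hsc _; apply: (hsc).
by elim: (nat_of_ord i) => //= k IH; apply: (hT).
Qed.

Lemma sub_Om (S : V -> Prop) a : submodule E F H S -> S a -> S (Om a).
Proof.
move=> hS ha; have hS' := hS; case: hS' => _ hadd hsc [hE hF hH].
rewrite /Om /Omega; apply: (hadd); first by apply: (hsc); apply: (hF); apply: (hE).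
apply: sub_pact => // b hb; apply: (hadd) => //; exact: (hH).
Qed.

Lemma sub_pO (S : V -> Prop) g a : submodule E F H S -> S a -> S (pO g a).
Proof. by move=> hS ha; apply: sub_pact => // b; apply: sub_Om. Qed.

Lemma gen_submodule x : submodule E F H (gen E F H x).
Proof.
split.
- by rewrite -(scale0r x); apply: gen_scale; apply: gen_base.
- exact: gen_add.
- exact: gen_scale.
- split; [exact: gen_E | exact: gen_F | exact: gen_H].
Qed.

Lemma gen_min (S : V -> Prop) x a : submodule E F H S -> S x -> gen E F H x a -> S a.
Proof.
case=> _ hadd hsc [hE hF hH] hx; elim => //.
- by move=> ? ? _ ? _ ?; apply: (hadd).
- by move=> ? ? _ ?; apply: (hsc).
- by move=> ? _ ?; apply: (hE).
- by move=> ? _ ?; apply: (hF).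
- by move=> ? _ ?; apply: (hH).
Qed.

Lemma gen_pO x g a : gen E F H x a -> gen E F H (pO g x) (pO g a).
Proof.
have [pa ps] := linpO g.
elim => [|? ? _ ? _ ?|? ? _ ?|? _ ?|? _ ?|? _ ?].
- exact: gen_base.
- by rewrite pa; apply: gen_add.
- by rewrite ps; apply: gen_scale.
- by rewrite -pOE; apply: gen_E.
- by rewrite -pOF; apply: gen_F.
- by rewrite -pOH; apply: gen_H.
Qed.

Lemma gen_kill x g a : pO g x = 0 -> gen E F H x a -> pO g a = 0.
Proof.
have [pa ps] := linpO g; move=> h0.
elim => [|? ? _ h1 _ h2|? ? _ h|? _ h|? _ h|? _ h] //.
- by rewrite pa h1 h2 addr0.
- by rewrite ps h scaler0.
- by rewrite -pOE h (lin0 _ (linL E)).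
- by rewrite -pOF h (lin0 _ (linL F)).
- by rewrite -pOH h (lin0 _ (linL H)).
Qed.

Section Whit.
Variables (eta : algC) (x : V).
Hypotheses (heta : eta != 0) (hx : E x = eta *: x).

Definition term c j := pact H (NN j) (pO c x).
Definition Rep d (c : nat -> {poly algC}) := \sum_(j < d) term (c j) j.
Definition Repr y := exists d c, y = Rep d c.

Lemma Ewh c : E (pO c x) = eta *: pO c x.
Proof. by rewrite pOE hx (proj2 (linpO c)). Qed.

Lemma linpH p : lin (pact H p).
Proof. exact: (pact_lin _ _ (linL H)). Qed.

Lemma E_pactH p z : E z = eta *: z ->
  E (pact H p z) = eta *: pact H (p \Po ('X + (-1)%:P)) z.
Proof.
move=> hz; transitivity (pact (fun a => H a + (-1) *: a) p (E z)).
  by apply: (pact_comm _ _ _ _ _ (linL E)) => a; rewrite relEH scaleN1r.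
by rewrite -(pact_comp _ _ _ _ (linL H)) hz (proj2 (linpH _)).
Qed.

Lemma term0 c : term c 0 = pO c x.
Proof. by rewrite /term /NN big_ord0 pact1. Qed.

Lemma Dterm0 c : E (term c 0) - eta *: term c 0 = 0.
Proof. by rewrite term0 Ewh subrr. Qed.

Lemma DtermS c j : E (term c j.+1) - eta *: term c j.+1 = - (eta * j.+1%:R) *: term c j.
Proof.
rewrite /term E_pactH ?Ewh // NN_shift.
have [pa ps] := linpH (NN j.+1).
rewrite pactB pactZ scalerBr addrAC subrr add0r scalerA scaleNr.
by [].
Qed.

Lemma Rep_pad d d' c : (d <= d')%N ->
  Rep d c = Rep d' (fun j => if (j < d)%N then c j else 0).
Proof.
move=> h; rewrite /Rep (big_ord_widen d' (fun j => term (c j) j) h) big_mkcond.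
apply: eq_bigr => i _; case: ifP => // _.
by rewrite /term /pO pact0 (lin0 _ (linpH _)).
Qed.

Lemma Repr0 : Repr 0.
Proof. by exists 0%N, (fun _ => 0); rewrite /Rep big_ord0. Qed.

Lemma ReprD y1 y2 : Repr y1 -> Repr y2 -> Repr (y1 + y2).
Proof.
move=> [d1 [c1 ->]] [d2 [c2 ->]].
exists (maxn d1 d2), (fun j => (if (j < d1)%N then c1 j else 0) + (if (j < d2)%N then c2 j else 0)).
rewrite (Rep_pad _ _ c1 (leq_maxl d1 d2)) (Rep_pad _ _ c2 (leq_maxr d1 d2)) /Rep -big_split.
by apply: eq_bigr => i _; rewrite /term /pO pactD (proj1 (linpH _)).
Qed.

Lemma ReprZ k y : Repr y -> Repr (k *: y).
Proof.
move=> [d [c ->]]; exists d, (fun j => k *: c j); rewrite /Rep scaler_sumr.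
by apply: eq_bigr => i _; rewrite /term /pO pactZ (proj2 (linpH _)).
Qed.

Lemma ReprB y1 y2 : Repr y1 -> Repr y2 -> Repr (y1 - y2).
Proof. by move=> h1 h2; rewrite -scaleN1r; apply: ReprD => //; apply: ReprZ. Qed.

Lemma Repr_sum n (G : 'I_n -> V) : (forall i, Repr (G i)) -> Repr (\sum_(i < n) G i).
Proof.
move=> hG; elim/big_rec: _ => [|i y _ hy]; first exact: Repr0.
exact: ReprD.
Qed.

Lemma Repr_term c j : Repr (term c j).
Proof.
exists j.+1, (fun i => if i == j then c else 0).
rewrite /Rep big_ord_recr /= eqxx big1 ?add0r // => i _.
by rewrite (ltn_eqF (ltn_ord i)) /term /pO pact0 (lin0 _ (linpH _)).
Qed.

Lemma Repr_lin T : lin T -> (forall c j, Repr (T (term c j))) ->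
  forall y, Repr y -> Repr (T y).
Proof.
move=> hT h y [d [c ->]]; rewrite /Rep (lin_sum _ _ _ hT).
by apply: Repr_sum => i; apply: h.
Qed.

Lemma ReprH y : Repr y -> Repr (H y).
Proof.
apply: Repr_lin; first exact: linL.
move=> c j; rewrite /term (pact_comm _ _ _ _ _ (linL H) (fun a => erefl)).
rewrite -pactMX.
have -> : NN j * 'X = NN j.+1 - j%:R *: NN j by rewrite NNS addrK.
by rewrite pactB pactZ; apply: ReprB; [exact: Repr_term | apply: ReprZ; exact: Repr_term].
Qed.

Lemma Repr_pactH p y : Repr y -> Repr (pact H p y).
Proof.
move=> hy; apply: Repr_sum => i; apply: ReprZ.
by elim: (nat_of_ord i) => //= k IH; apply: ReprH.
Qed.

Lemma ReprE y : Repr y -> Repr (E y).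
Proof.
apply: Repr_lin; first exact: linL.
move=> c [|j].
  have := Dterm0 c => /eqP; rewrite subr_eq0 => /eqP ->.
  by apply: ReprZ; exact: Repr_term.
have := DtermS c j => /(canRL (subrK _)) ->.
by apply: ReprD; apply: ReprZ; exact: Repr_term.
Qed.

Lemma Fz c : F (pO c x) =
  (2%:R * eta)^-1 *: (pO ('X * c) x - pact H (u \Po ('X + 1%:P)) (pO c x)).
Proof.
rewrite pOX /Om /Omega -/pO Ewh (proj2 (linL F)).
have -> : pact (fun x => H x + x) u (pO c x) = pact H (u \Po ('X + 1%:P)) (pO c x).
  by rewrite (pact_comp _ _ _ _ (linL H)); apply: pact_ext => a; rewrite scale1r.
rewrite addrK !scalerA -mulrA mulVf ?scale1r //.
by rewrite mulf_neq0 // two_neq0.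
Qed.

Lemma ReprF y : Repr y -> Repr (F y).
Proof.
apply: Repr_lin; first exact: linL.
move=> c j; rewrite /term.
have -> : F (pact H (NN j) (pO c x)) = pact H (NN j \Po ('X + 1%:P)) (F (pO c x)).
  rewrite (pact_comp _ _ _ _ (linL H)).
  transitivity (pact (fun a => H a + a) (NN j) (F (pO c x))).
    exact: (pact_comm _ _ _ _ _ (linL F) relFH).
  by apply: pact_ext => a; rewrite scale1r.
apply: Repr_pactH; rewrite Fz; apply: ReprZ; apply: ReprB.
  by rewrite -term0; exact: Repr_term.
by apply: Repr_pactH; rewrite -term0; exact: Repr_term.
Qed.

Lemma Repr_gen a : gen E F H x a -> Repr a.
Proof.
elim => [|? ? _ ? _ ?|? ? _ ?|? _ ?|? _ ?|? _ ?].
- by have := Repr_term 1 0; rewrite term0 /pO pact1.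
- exact: ReprD.
- exact: ReprZ.
- exact: ReprE.
- exact: ReprF.
- exact: ReprH.
Qed.

Lemma D_Rep d c : E (Rep d.+1 c) - eta *: Rep d.+1 c =
  Rep d (fun j => - (eta * j.+1%:R) *: c j.+1).
Proof.
rewrite /Rep (lin_sum _ _ _ (linL E)) scaler_sumr -sumrB big_ord_recl Dterm0 add0r.
by apply: eq_bigr => i _; rewrite DtermS /term /pO pactZ (proj2 (linpH _)).
Qed.

Lemma kS j : - (eta * j.+1%:R) != 0.
Proof. by rewrite oppr_eq0 mulf_neq0 // pnatr_eq0. Qed.

Lemma Rep_zero d c : Rep d c = 0 -> forall j, (j < d)%N -> pO (c j) x = 0.
Proof.
elim: d c => [|d IH] c h0 j hj //.
have h1 := D_Rep d c; rewrite h0 (lin0 _ (linL E)) scaler0 subrr in h1.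
have hS : forall k, (k < d)%N -> pO (c k.+1) x = 0.
  move=> k hk; have := IH _ (esym h1) k hk; rewrite /pO pactZ => /eqP.
  by rewrite scaler_eq0 (negbTE (kS k)) /= => /eqP.
case: j hj => [|j] hj; last exact: hS.
move: h0; rewrite /Rep big_ord_recl term0 big1 ?addr0 // => i _.
by rewrite /term hS // (lin0 _ (linpH _)).
Qed.

Lemma whit a : gen E F H x a -> E a = eta *: a -> exists g, a = pO g x.
Proof.
move=> ga ea; have [d [c ac]] := Repr_gen _ ga.
case: d c ac => [|d] c ac.
  by exists 0; rewrite ac /Rep big_ord0 /pO pact0.
exists (c 0%N).
have h1 := D_Rep d c; rewrite -ac ea subrr in h1.
have hS : forall k, (k < d)%N -> pO (c k.+1) x = 0.
  move=> k hk; have := Rep_zero _ _ (esym h1) _ hk; rewrite /pO pactZ => /eqP.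
  by rewrite scaler_eq0 (negbTE (kS k)) /= => /eqP.
rewrite ac /Rep big_ord_recl term0 big1 ?addr0 // => i _.
by rewrite /term hS // (lin0 _ (linpH _)).
Qed.

End Whit.

Lemma main_sec (eta : algC) (heta : eta != 0)
  (w : V) (hw : E w = eta *: w) (hcyc : forall v : V, gen E F H w v)
  (m : nat) (ps : 'I_m -> {poly algC}) (ns : 'I_m -> nat)
  (hirr : forall i, irreducible_poly (ps i))
  (hnassoc : forall i j, i != j -> ~~ (ps i %= ps j))
  (hns : forall i, (0 < ns i)%N)
  (hZV : forall q : {poly algC},
      (forall v : V, pact (Omega u E F H) q v = 0) <->
      (\prod_(i < m) ps i ^+ ns i) %| q) :
  let Vi := fun i : 'I_m =>
    gen E F H (pact (Omega u E F H) (\prod_(j < m | j != i) ps j ^+ ns j) w) in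
  (forall i, indecomposable E F H (Vi i)) /\ direct_sum_decomp Vi.
Proof.
set r := fun i => ps i ^+ ns i.
set q := fun i => \prod_(j < m | j != i) ps j ^+ ns j.
set P := \prod_(i < m) ps i ^+ ns i.
set x := fun i => pO (q i) w.
move=> Vi; rewrite -/pO -/Om in hZV *.
have rcop : forall i j, i != j -> coprimep (r i) (r j).
  move=> i j hij; apply: coprimep_expl; apply: coprimep_expr.
  exact: irr_coprime (hirr i) (hirr j) (hnassoc i j hij).
have Pr : forall i, P = r i * q i by move=> i; rewrite /P (bigD1 i) //=.
have rdq : forall i j, i != j -> r i %| q j.
  move=> i j hij; rewrite /q (bigD1 i) /=; last by apply: contraNneq hij => ->.
  by rewrite /r dvdp_mulIl.
have qcop : forall i, coprimep (r i) (q i).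
  move=> i; rewrite /q; apply: (big_ind (fun t => coprimep (r i) t)).
  - exact: coprimep1.
  - by move=> a b ha hb; rewrite coprimepMr ha hb.
  - by move=> j hj; apply: rcop; rewrite eq_sym.
have qnz : forall i, q i != 0.
  move=> i; rewrite /q; apply: (big_ind (fun t : {poly algC} => t != 0)).
  - exact: oner_neq0.
  - by move=> a b ha hb; rewrite mulf_neq0.
  - by move=> j _; rewrite expf_neq0 // irredp_neq0.
have kill : forall g, P %| g -> forall v, pO g v = 0 by move=> g hg; apply/hZV.
have K2 : forall i v, Vi i v -> pO (r i) v = 0.
  move=> i v hv; apply: (gen_kill _ _ _ _ hv).
  have : pO P w = 0 by apply: kill; exact: dvdpp.
  by rewrite (Pr i) pOM.
have K3 : forall i g, pO g (x i) = 0 -> r i %| g.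
  move=> i g h; have h' : forall v, pO (g * q i) v = 0.
    by move=> v; apply: (gen_kill _ _ _ _ (hcyc v)); rewrite pOM.
  by have := (proj1 (hZV _)) h'; rewrite -/P (Pr i) dvdp_mul2r.
have Kdiv : forall i g v, r i %| g -> Vi i v -> pO g v = 0.
  move=> i g v /dvdpP [k ->] hv; rewrite pOM K2 //; exact: (lin0 _ (linpO k)).
have Ex : forall i, E (x i) = eta *: x i.
  by move=> i; rewrite /x pOE hw (proj2 (linpO _)).
split.
  move=> i; split.
  - exact: gen_submodule.
  - move=> hz; have x0 : x i = 0 := hz _ (gen_base _ _ _ _).
    have h1 : r i %| 1 by apply: (K3 i 1); rewrite /pO pact1 x0.
    have := dvdp_trans (dvdp_exp (hns i) (dvdpp (ps i))) h1.
    by rewrite dvdp1 => /eqP hs; move: (irr_size _ (hirr i)); rewrite hs.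
  - move=> A B hA hB sA sB cov dis.
    have [a [b [Aa Bb xab]]] := cov _ (gen_base _ _ _ _).
    change (x i = a + b) in xab.
    have hA' := hA; have hB' := hB.
    case: hA' => _ Aadd Asc [AE _ _]; case: hB' => _ Badd Bsc [BE _ _].
    have ea : E a = eta *: a.
      have e1 : E a - eta *: a = eta *: b - E b.
        have := Ex i; rewrite xab (proj1 (linL E)) scalerDr => h.
        exact: zk5.
      apply/eqP; rewrite -subr_eq0; apply/eqP; apply: dis.
        by rewrite -scaleNr; apply: Aadd; [exact: AE | exact: Asc].
      by rewrite e1 -scaleN1r; apply: Badd; [exact: Bsc | apply: Bsc; exact: BE].
    have [c ac] := whit _ _ heta (Ex i) _ (sA _ Aa) ea.
    have bc : b = pO (1 - c) (x i).
      by rewrite /pO pactB pact1 -/pO -ac {1}xab addrC addKr.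
    have hcc : pO (c * (1 - c)) (x i) = 0.
      apply: dis.
        by rewrite mulrC pOM -ac; apply: sub_pO.
      by rewrite pOM -bc; apply: sub_pO.
    have := K3 i _ hcc => /(pp_split _ _ _ (hirr i)) [hd|hd].
      have a0 : a = 0 by rewrite ac; apply: (Kdiv i) => //; exact: gen_base.
      left => y Ay; apply: dis => //; apply: (gen_min _ (x i) _ hB); last exact: sA.
      by rewrite xab a0 add0r.
    have b0 : b = 0 by rewrite bc; apply: (Kdiv i) => //; exact: gen_base.
    right => y By; apply: dis => //; apply: (gen_min _ (x i) _ hA); last exact: sB.
    by rewrite xab b0 addr0.
have [ab hab] : exists ab : 'I_m -> {poly algC} * {poly algC},
    forall i, (ab i).1 * r i + (ab i).2 * q i = 1.
  have hx : forall i, exists ab : {poly algC} * {poly algC}, ab.1 * r i + ab.2 * q i == 1.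
    move=> i; have [ab hab] := Bezout_eq1_coprimepP _ _ (qcop i).
    by exists ab; rewrite hab.
  by exists (fun i => xchoose (hx i)) => i; apply/eqP; exact: (xchooseP (hx i)).
set e := fun i => (ab i).2 * q i.
have e1 : forall i, 1 - e i = (ab i).1 * r i by move=> i; rewrite -(hab i) addrK.
have ee : forall i, e i = 1 - (ab i).1 * r i.
  by move=> i; rewrite -e1 opprB addrCA subrr addr0.
have Pe : P %| 1 - \sum_(i < m) e i.
  have := prod_dvd _ r (1 - \sum_(i < m) e i) _ (index_enum_uniq _) rcop.
  apply => j; rewrite (bigD1 j) //= opprD addrA e1; apply: dvdp_add.
    exact: dvdp_mull (dvdpp _).
  rewrite dvdpNr; apply: (big_ind (fun t => r j %| t)).
  - exact: dvdp0.
  - by move=> ? ? ? ?; apply: dvdp_add.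
  - by move=> k hk; apply: dvdp_mull; apply: rdq; rewrite eq_sym.
split.
  move=> v; exists (fun i => pO (e i) v); split.
    move=> i; rewrite /e pOM; apply: sub_pO; first exact: gen_submodule.
    exact: gen_pO (hcyc v).
  have := kill _ Pe v; rewrite /pO pactB pact1 pact_sum => /eqP.
  by rewrite subr_eq0 => /eqP.
move=> vs hvs hsum i.
have hz : forall j, j != i -> pO (e i) (vs j) = 0.
  move=> j hji; apply: (Kdiv j); last exact: hvs.
  by rewrite /e; apply: dvdp_mull; exact: rdq.
have := congr1 (pO (e i)) hsum.
rewrite (lin0 _ (linpO _)) (lin_sum _ _ _ (linpO _)) (bigD1 i) //= big1 ?addr0 //.
rewrite ee /pO pactB pact1 -/pO (Kdiv i) ?subr0 //.
exact: dvdp_mull (dvdpp _).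
Qed.

End Rf.

End Pact.

Theorem mainTheorem10
  (f u : {poly algC})
  (hfu : f = 2%:R^-1 *: (u \Po ('X + 1) - u))
  (V : lmodType algC) (E F H : {linear V -> V})
  (hrel : Rf_relations f E F H)
  (eta : algC) (heta : eta != 0)
  (w : V) (hw : E w = eta *: w) (hcyc : forall v : V, gen E F H w v)
  (m : nat) (ps : 'I_m -> {poly algC}) (ns : 'I_m -> nat)
  (hirr : forall i, irreducible_poly (ps i))
  (hnassoc : forall i j, i != j -> ~~ (ps i %= ps j))
  (hns : forall i, (0 < ns i)%N)
  (hZV : forall q : {poly algC},
      (forall v : V, pact (Omega u E F H) q v = 0) <->
      (\prod_(i < m) ps i ^+ ns i) %| q) :
  let Vi := fun i : 'I_m =>
    gen E F H (pact (Omega u E F H) (\prod_(j < m | j != i) ps j ^+ ns j) w) in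
  (forall i, indecomposable E F H (Vi i)) /\ direct_sum_decomp Vi.
Proof.
move=> Vi; exact: (@main_sec V f u E F H hfu hrel eta heta w hw hcyc m ps ns hirr hnassoc hns hZV).
Qed.
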